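(* The maps $\partial_{l-k}:\mathcal M_{l-k}\to\mathcal M_{l-k-1}$ are homomorphisms of $\mathbb Z[W]$-modules and satisfy $\partial_{l-k-1}\circ\partial_{l-k}=0$; thus $(\mathcal M_*,\partial)$ is a chain complex of $\mathbb Z[W]$-modules.
   Context: Let $\mathfrak g$ be a real split semisimple Lie algebra of rank $l$ with simple roots $\Pi=\{\alpha_1,\dots,\alpha_l\}$, Cartan matrix $C_{i,j}=\alpha_i(h_{\alpha_j})$ ($h_{\alpha_j}$ coroots), Weyl group $W$. For $S\subset\Pi$ let $W_S$ be generated by $s_\alpha$, $\alpha\in S$, and $\mathbb D(S)$ the set of functions $\eta:S\to\{\pm1\}$. For $\alpha_i\in S$ let $(s_{\alpha_i}\eta)(\alpha_j)=\eta(\alpha_j)\eta(\alpha_i)^{-C_{j,i}}$ ($\alpha_j\in S$) and $r_i=|\{\alpha_j\in\Pi\setminus S:C_{j,i}\text{ odd}\}|$; the free abelian group $\mathbb Z[\mathbb D(S)]$ is a $\mathbb Z[W_S]$-module with $s_{\alpha_i}\cdot\eta=\eta(\alpha_i)^{r_i}(s_{\alpha_i}\eta)$. Put $\mathcal M(S)=\mathbb Z[W]\otimes_{\mathbb Z[W_S]}\mathbb Z[\mathbb D(S)]$, with $\mathbb Z$-basis $w^\bullet\otimes\eta$ ($w^\bullet$ minimal-length representatives of $W/W_S$, $\eta\in\mathbb D(S)$), and $\mathcal M_{l-k}=\bigoplus_{|S|=k}\mathcal M(S)$. For $\eta\in\mathbb D(S)$ with $\Pi\setminus S=\{\alpha_{i_1},\dots,\alpha_{i_m}\}$,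 $i_1<\dots<i_m$, and $c\in\{1,2\}$, $\partial_{j,c}\eta\in\mathbb D(S\cup\{\alpha_{i_j}\})$ extends $\eta$ by $\alpha_{i_j}\mapsto-1$ if $c=1$, $+1$ if $c=2$. Define $\partial_{l-k}(w^\bullet\otimes\eta)=\sum_{j=1}^{l-k}\sum_{c=1}^2(-1)^{j+c+1}w^\bullet\otimes\partial_{j,c}\eta$, the $(j,c)$ term in $\mathcal M(S\cup\{\alpha_{i_j}\})$, extended $\mathbb Z$-linearly. *)

(* Defs.v *)
From HB Require Import structures.
From mathcomp Require Import all_boot all_order all_fingroup all_algebra.

Set Implicit Arguments.
Unset Strict Implicit.
Unset Printing Implicit Defensive.

Import GRing.Theory Num.Theory.
Local Open Scope ring_scope.

(* Cartan matrix of a (real split) semisimple Lie algebra of rank l,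
   C i j = alpha_i(h_{alpha_j}): Cartan matrices of finite type
   (diagonal 2, nonpositive off-diagonal, symmetric zero pattern,
   symmetrizable by a positive diagonal matrix to a positive definite form). *)
Definition cartan_finite (l : nat) (C : 'M[int]_l) : Prop :=
  [/\ forall i, C i i = 2,
      forall i j, i != j -> C i j <= 0,
      forall i j, (C i j == 0) = (C j i == 0) &
      exists d : 'I_l -> rat,
        [/\ forall i, 0 < d i,
            forall i j, d i * (C i j)%:~R = d j * (C j i)%:~R &
            forall x : 'I_l -> rat, (exists i, x i != 0) ->
              0 < \sum_i \sum_j x i * d i * (C i j)%:~R * x j]].

(* Matrix of the simple reflection s_{alpha_i} on the root lattice in the
   basis of simple roots (acting on column vectors):
   s_i(alpha_j) = alpha_j - C j i alpha_i. *)
Definition simple_refl (l : nat) (C : 'M[int]_l) (i : 'I_l) : 'M[int]_l :=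
  \matrix_(a, b) ((a == b)%:Z - (a == i)%:Z * C b i).

Section Complex.
Variables (l : nat) (C : 'M[int]_l) (gT : finGroupType) (W : {group gT})
          (s : 'I_l -> gT).

(* A generator (w, S, N) stands for  w (x) eta  in  M(S), where
   eta : S -> {+-1} takes the value -1 exactly on N (N \subset S). *)
Definition gen := (gT * {set 'I_l} * {set 'I_l})%type.

Definition fmod := {ffun gen -> int}.

Definition basis_el (w : gT) (S N : {set 'I_l}) : fmod :=
  [ffun g => ((g == (w, S, N)) : nat)%:Z].

Definition valid_gen (g : gen) : bool := (g.1.1 \in W) && (g.2 \subset g.1.2).

Definition valid (x : fmod) : Prop := forall g, x g != 0 -> valid_gen g.

Definition WS (S : {set 'I_l}) : {group gT} := <<[set s i | i in S]>>%G.

(* (s_{alpha_i} eta)(alpha_j) = eta(alpha_j) eta(alpha_i)^(-C j i) *)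
Definition sact (S N : {set 'I_l}) (i : 'I_l) : {set 'I_l} :=
  if i \in N then
    let F := [set j in S | odd (absz (C j i))] in (N :\: F) :|: (F :\: N)
  else N.

Definition rr (S : {set 'I_l}) (i : 'I_l) : nat :=
  #|[set j in ~: S | odd (absz (C j i))]|.

(* eta(alpha_i)^(r_i) *)
Definition sgn (S N : {set 'I_l}) (i : 'I_l) : int :=
  if (i \in N) && odd (rr S i) then -1 else 1.

(* Defining relation of Z[W] (x)_{Z[W_S]} Z[D(S)]:
   (w s_i) (x) eta = w (x) (s_i . eta),  for alpha_i in S. *)
Definition rel (w : gT) (S N : {set 'I_l}) (i : 'I_l) : fmod :=
  basis_el (w * s i)%g S N - basis_el w S (sact S N i) *~ sgn S N i.

(* x lies in the relation submodule (x = 0 in the direct sum of the M(S)). *)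
Definition inR (x : fmod) : Prop :=
  exists c : gT -> {set 'I_l} -> {set 'I_l} -> 'I_l -> int,
    x = \sum_(w in W) \sum_(S : {set 'I_l}) \sum_(N : {set 'I_l} | N \subset S)
          \sum_(i in S) rel w S N i *~ c w S N i.

Definition minrep (S : {set 'I_l}) (w : gT) : Prop :=
  forall x, x \in (w *: WS S)%g ->
  forall t : seq 'I_l, (\prod_(i <- t) s i)%g = x ->
  exists2 t' : seq 'I_l, (size t' <= size t)%N & (\prod_(i <- t') s i)%g = w.

Definition pos (S : {set 'I_l}) (i : 'I_l) : nat :=
  #|[set i' in ~: S | (i' < i)%N]|.+1.

Definition bdry (w : gT) (S N : {set 'I_l}) : fmod :=
  \sum_(i | i \notin S) \sum_(c <- [:: 1%N; 2%N])
     basis_el w (i |: S) (if c == 1%N then i |: N else N)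
       *~ ((-1) ^+ (pos S i + c + 1)).

Definition Dmap (d : gen -> fmod) (x : fmod) : fmod := \sum_g d g *~ x g.

Definition wact (u : gT) (x : fmod) : fmod :=
  [ffun g : gen => x ((u^-1 * g.1.1)%g, g.1.2, g.2)].

Definition respectsR (d : gen -> fmod) : Prop :=
  forall x, inR x -> inR (Dmap d x).

Definition basis_formula (d : gen -> fmod) : Prop :=
  forall (w : gT) (S N : {set 'I_l}), w \in W -> N \subset S -> minrep S w ->
    inR (d (w, S, N) - bdry w S N).

End Complex.

(* Main.v *)
Require Import Defs.
From HB Require Import structures.
From mathcomp Require Import all_boot all_order all_fingroup all_algebra.
Import GRing.Theory Num.Theory.
Local Open Scope ring_scope.
Set Implicit Arguments.
Unset Strict Implicit.

Section Work.
Variables (l : nat) (C : 'M[int]_l) (gT : finGroupType) (W : {group gT})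
          (s : 'I_l -> gT).

Local Notation fm := (fmod l gT).
Local Notation R := (inR C W s).

Lemma inR0 : R 0.
Proof.
exists (fun _ _ _ _ => 0).
symmetry; apply: big1 => w _; apply: big1 => S _; apply: big1 => N _; apply: big1 => i _.
by rewrite mulr0z.
Qed.

Lemma inRD x y : R x -> R y -> R (x + y).
Proof.
move=> [c ->] [c' ->]; exists (fun w S N i => c w S N i + c' w S N i).
rewrite -big_split; apply: eq_bigr => w _.
rewrite -big_split; apply: eq_bigr => S _.
rewrite -big_split; apply: eq_bigr => N _.
rewrite -big_split; apply: eq_bigr => i _.
by rewrite mulrzDr.
Qed.

Lemma inRMz x z : R x -> R (x *~ z).
Proof.
move=> [c ->]; exists (fun w S N i => c w S N i * z).
rewrite !mulrz_suml; apply: eq_bigr => w _.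
rewrite !mulrz_suml; apply: eq_bigr => S _.
rewrite !mulrz_suml; apply: eq_bigr => N _.
rewrite !mulrz_suml; apply: eq_bigr => i _.
by rewrite mulrzA.
Qed.

Lemma inRN x : R x -> R (- x).
Proof. by move=> h; rewrite -mulrN1z; apply: inRMz. Qed.

Lemma inRB x y : R x -> R y -> R (x - y).
Proof. by move=> hx hy; apply: inRD => //; apply: inRN. Qed.

Lemma inR_sum (I : Type) (r : seq I) (P : pred I) (F : I -> fm) :
  (forall i, P i -> R (F i)) -> R (\sum_(i <- r | P i) F i).
Proof.
move=> h; elim/big_rec: _ => [|i x Pi Rx]; first exact: inR0.
by apply: inRD => //; apply: h.
Qed.

Lemma inR_eq x y : x = y -> R x -> R y.
Proof. by move=> ->. Qed.

Lemma inR_rel (w : gT) (S N : {set 'I_l}) (i : 'I_l) : w \in W -> N \subset S -> i \in S -> R (Defs.rel C s w S N i).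
Proof.
move=> wW NS iS.
exists (fun w' S' N' i' => ((w' == w) && (S' == S) && (N' == N) && (i' == i) : nat)%:Z).
rewrite (bigD1 w) //= [X in _ + X]big1 ?addr0; last first.
  move=> w' /andP [_ /negbTE ->]; apply: big1 => S' _; apply: big1 => N' _.
  by apply: big1 => i' _; rewrite mulr0z.
rewrite (bigD1 S) //= [X in _ + X]big1 ?addr0; last first.
  move=> S' /negbTE ->; apply: big1 => N' _.
  by apply: big1 => i' _; rewrite andbF mulr0z.
rewrite (bigD1 N) //= [X in _ + X]big1 ?addr0; last first.
  move=> N' /andP [_ /negbTE ->].
  by apply: big1 => i' _; rewrite andbF mulr0z.
rewrite (bigD1 i) //= [X in _ + X]big1 ?addr0; last first.
  by move=> i' /andP [_ /negbTE ->]; rewrite andbF mulr0z.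
by rewrite !eqxx.
Qed.


Local Notation Dm := (@Dmap l gT).

Lemma DmapD d x y : Dm d (x + y) = Dm d x + Dm d y.
Proof. by rewrite /Dmap -big_split; apply: eq_bigr => g _; rewrite ffunE mulrzDr. Qed.

Lemma Dmap0 d : Dm d 0 = 0.
Proof. by rewrite /Dmap big1 // => g _; rewrite ffunE mulr0z. Qed.

Lemma DmapMz d x z : Dm d (x *~ z) = Dm d x *~ z.
Proof.
rewrite /Dmap mulrz_suml; apply: eq_bigr => g _.
by rewrite ffunMzE mulrzz mulrzA.
Qed.

Lemma DmapN d x : Dm d (- x) = - Dm d x.
Proof. by rewrite -mulrN1z DmapMz mulrN1z. Qed.

Lemma DmapB d x y : Dm d (x - y) = Dm d x - Dm d y.
Proof. by rewrite DmapD DmapN. Qed.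

Lemma Dmap_sum d (I : Type) (r : seq I) (P : pred I) (F : I -> fm) :
  Dm d (\sum_(i <- r | P i) F i) = \sum_(i <- r | P i) Dm d (F i).
Proof. exact: (big_morph _ (DmapD d) (Dmap0 d)). Qed.

Lemma Dmap_basis d (w : gT) (S N : {set 'I_l}) : Dm d (basis_el w S N) = d (w, S, N).
Proof.
rewrite /Dmap (bigD1 (w, S, N)) //= big1 ?addr0; first by rewrite ffunE eqxx mulr1z.
by move=> g /negbTE hg; rewrite ffunE hg mulr0z.
Qed.


Lemma sum12 (M : zmodType) (F : nat -> M) : \sum_(c <- [:: 1%N; 2%N]) F c = F 1%N + F 2%N.
Proof. by rewrite !big_cons big_nil addr0. Qed.

Definition bd (g : gen l gT) : fm := bdry g.1.1 g.1.2 g.2.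

Lemma rr_add (S : {set 'I_l}) i j : j \notin S ->
  rr C S i = (odd `|C j i| + rr C (j |: S) i)%N.
Proof.
move=> jS; rewrite /rr (cardsD1 j) !inE jS /=.
have -> : [set j0 in ~: S | odd `|C j0 i|] :\ j = [set j0 in ~: (j |: S) | odd `|C j0 i|].
  by apply/setP => k; rewrite !inE; case: (k == j).
by [].
Qed.

Lemma key_term (w : gT) (S N : {set 'I_l}) (i j : 'I_l) :
  N \subset S -> i \in S -> j \notin S ->
  \sum_(c <- [:: 1%N; 2%N])
     basis_el w (j |: S) (sact C (j |: S) (if c == 1%N then j |: N else N) i)
       *~ sgn C (j |: S) (if c == 1%N then j |: N else N) i *~ ((-1) ^+ (pos S j + c + 1))
  = \sum_(c <- [:: 1%N; 2%N])
     basis_el w (j |: S) (if c == 1%N then j |: sact C S N i else sact C S N i)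
       *~ ((-1) ^+ (pos S j + c + 1)) *~ sgn C S N i.
Proof.
move=> NS iS jS.
have ij : (i == j) = false by apply/negbTE; apply: contraNneq jS => <-.
have jN : j \notin N by apply: contra jS; apply: (subsetP NS).
rewrite !sum12; set p := pos S j; rewrite /=.
have -> : (-1) ^+ (p + 2 + 1) = - (-1) ^+ (p + 1 + 1) :> int.
  by rewrite !addn1 addn2 exprS mulN1r.
rewrite /sact /sgn !inE ij /= (rr_add i jS).
case: (boolP (i \in N)) => iN /=; last by rewrite !mulr1z addrC.
set e := (-1) ^+ (p + 1 + 1); rewrite oddD.
case oj: (odd `|C j i|).
- have eF : [set k in j |: S | odd `|C k i|] = j |: [set k in S | odd `|C k i|].
    by apply/setP => k; rewrite !inE; case: (eqVneq k j) => [->|] //=; rewrite oj.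
  rewrite eF.
  set F := [set k in S | odd `|C k i|].
  have jF : j \notin F by rewrite !inE (negbTE jS).
  have e1 : ((j |: N) :\: (j |: F)) :|: ((j |: F) :\: (j |: N)) = (N :\: F) :|: (F :\: N).
    apply/setP => k; rewrite !inE; case: (eqVneq k j) => [->|] //=.
    by rewrite ?(negbTE jN) ?(negbTE jS).
  have e2 : (N :\: (j |: F)) :|: ((j |: F) :\: N) = j |: ((N :\: F) :|: (F :\: N)).
    apply/setP => k; rewrite !inE; case: (eqVneq k j) => [->|] //=.
    by rewrite ?(negbTE jN) ?(negbTE jS).
  rewrite e1 e2 -!mulrzA.
  case: (odd (rr C (j |: S) i)) => /=; rewrite ?mulN1r ?mul1r ?mulrN1 ?mulr1 ?opprK addrC //.
- have eF : [set k in j |: S | odd `|C k i|] = [set k in S | odd `|C k i|].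
    by apply/setP => k; rewrite !inE; case: (eqVneq k j) => [->|] //=; rewrite oj andbF.
  rewrite eF.
  set F := [set k in S | odd `|C k i|].
  have jF : j \notin F by rewrite !inE (negbTE jS).
  have e1 : ((j |: N) :\: F) :|: (F :\: (j |: N)) = j |: ((N :\: F) :|: (F :\: N)).
    apply/setP => k; rewrite !inE; case: (eqVneq k j) => [->|] //=.
    by rewrite ?(negbTE jN) ?(negbTE jS).
  rewrite e1 -!mulrzA.
  by case: (odd (rr C (j |: S) i)) => /=; rewrite ?mulN1r ?mul1r ?mulrN1 ?mulr1 ?opprK.
Qed.

Lemma Nc_sub (S N : {set 'I_l}) j (c : nat) : N \subset S ->
  (if c == 1%N then j |: N else N) \subset j |: S.
Proof.
move=> NS; case: (c == 1%N); first by apply: setUS.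
by apply: subset_trans NS (subsetUr _ _).
Qed.

Lemma bd_rel (w : gT) (S N : {set 'I_l}) (i : 'I_l) : w \in W -> N \subset S -> i \in S ->
  R (Dm bd (Defs.rel C s w S N i)).
Proof.
move=> wW NS iS.
rewrite /Defs.rel DmapB DmapMz !Dmap_basis /bd /=.
have -> : bdry (w * s i)%g S N - bdry w S (sact C S N i) *~ sgn C S N i =
  \sum_(j | j \notin S) \sum_(c <- [:: 1%N; 2%N])
     Defs.rel C s w (j |: S) (if c == 1%N then j |: N else N) i *~ ((-1) ^+ (pos S j + c + 1)).
  rewrite /bdry mulrz_suml -sumrB; apply: eq_bigr => j jS.
  rewrite mulrz_suml -(key_term w NS iS jS) -sumrB; apply: eq_bigr => c _.
  by rewrite /Defs.rel mulrzBl.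
apply: inR_sum => j jS; apply: inR_sum => c _; apply: inRMz; apply: inR_rel => //.
  exact: Nc_sub.
by rewrite !inE iS orbT.
Qed.

End Work.


Section Work2.
Variables (l : nat) (C : 'M[int]_l) (gT : finGroupType) (W : {group gT})
          (s : 'I_l -> gT).

Local Notation fm := (fmod l gT).
Local Notation R := (inR C W s).
Local Notation Dm := (@Dmap l gT).
Local Notation bd := (@bd l gT).

Lemma zlem (M : zmodType) (a b c d : M) : a - b = (a - c - (b - d)) + (c - d).
Proof. by rewrite opprB addrACA subrK addrAC subrr add0r. Qed.

Lemma bd_resp : respectsR C W s bd.
Proof.
move=> x [c ->].
rewrite Dmap_sum; apply: inR_sum => w wW.
rewrite Dmap_sum; apply: inR_sum => S _.
rewrite Dmap_sum; apply: inR_sum => N NS.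
rewrite Dmap_sum; apply: inR_sum => i iS.
by rewrite DmapMz; apply: inRMz; apply: bd_rel.
Qed.

Lemma sact_sub (S N : {set 'I_l}) i : N \subset S -> sact C S N i \subset S.
Proof.
move=> NS; rewrite /sact; case: (i \in N) => //=.
rewrite subUset; apply/andP; split.
  exact: subset_trans (subsetDl _ _) NS.
apply: subset_trans (subsetDl _ _) _.
by apply/subsetP => k; rewrite inE => /andP [].
Qed.

Lemma reduce (S : {set 'I_l}) (sW : forall i, s i \in W) n :
  forall (f : 'I_n -> gT) (u : gT) (N : {set 'I_l}),
  (forall k, f k \in s @: S) -> u \in W -> N \subset S ->
  exists e : int, exists2 N' : {set 'I_l}, N' \subset S &
    R (basis_el (u * \prod_(k < n) f k)%g S N - basis_el u S N' *~ e).
Proof.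
elim: n => [|n IH] f u N fS uW NS.
  exists 1; exists N => //; rewrite big_ord0 mulg1 mulr1z subrr; exact: inR0.
rewrite big_ord_recl.
have [i iS ->] := imsetP (fS ord0).
have u'W : (u * s i)%g \in W by rewrite groupM.
have [e [N' N'S h]] := IH (fun k => f (lift ord0 k)) _ N (fun k => fS _) u'W NS.
exists (sgn C S N' i * e); exists (sact C S N' i); first exact: sact_sub.
rewrite mulgA.
apply: inR_eq (inRD h (inRMz e (inR_rel C s uW N'S iS))).
rewrite /Defs.rel mulrzBl -mulrzA addrA subrK //.
Qed.


Lemma word_prod n : forall (c : 'I_n -> gT), (forall k, exists i, c k = s i) ->
  exists t : seq 'I_l, (\prod_(i <- t) s i)%g = (\prod_(k < n) c k)%g.
Proof.
elim: n => [|n IH] c cA.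
  by exists [::]; rewrite big_nil big_ord0.
have [t ht] := IH (fun k => c (lift ord0 k)) (fun k => cA _).
have [i ei] := cA ord0.
by exists (i :: t); rewrite big_cons big_ord_recl ht ei.
Qed.

Lemma word_of (hgen : W :=: <<[set s i | i : 'I_l]>>%g) x : x \in W ->
  exists t : seq 'I_l, (\prod_(i <- t) s i)%g = x.
Proof.
rewrite hgen => /gen_prodgP [n [c cA ->]].
apply: word_prod => k; have [i _ ->] := imsetP (cA k); by exists i.
Qed.

Lemma sW_of (hgen : W :=: <<[set s i | i : 'I_l]>>%g) i : s i \in W.
Proof. by rewrite hgen mem_gen // imset_f. Qed.

Lemma WS_sub (hgen : W :=: <<[set s i | i : 'I_l]>>%g) S : WS s S \subset W.
Proof.
rewrite /WS /= gen_subG; apply/subsetP => x /imsetP [i _ ->].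
exact: sW_of.
Qed.

Lemma minrep_ex (hgen : W :=: <<[set s i | i : 'I_l]>>%g) (S : {set 'I_l}) w :
  w \in W -> exists w0, [/\ w0 \in W, minrep s S w0 & (w0^-1 * w)%g \in WS s S].
Proof.
move=> wW.
pose P n := [exists x in (w *: WS s S)%g, exists t : n.-tuple 'I_l, (\prod_(i <- t) s i)%g == x].
have exP : exists n, P n.
  have [t ht] := word_of hgen wW.
  exists (size t); apply/existsP; exists w; rewrite lcoset_refl /=.
  by apply/existsP; exists (in_tuple t); rewrite ht.
case: (ex_minnP exP) => n0 /existsP [x0 /andP [x0c /existsP [t0 /eqP ht0]]] minn0.
have x0W : x0 \in W.
  have [a aS ->] := lcosetP x0c.
  by rewrite groupM // (subsetP (WS_sub hgen S)).
exists x0; split => //.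
  move=> x xc t ht; exists (val t0); first by rewrite size_tuple; apply: minn0;
    apply/existsP; exists x; rewrite (lcoset_trans xc x0c) /=;
    apply/existsP; exists (in_tuple t); rewrite ht.
  by [].
by rewrite -mem_lcoset lcoset_sym.
Qed.


Lemma d_close (hgen : W :=: <<[set s i | i : 'I_l]>>%g) (d : gen l gT -> fm) :
  respectsR C W s d -> basis_formula C W s d ->
  forall (w : gT) (S N : {set 'I_l}), w \in W -> N \subset S ->
  R (d (w, S, N) - bdry w S N).
Proof.
move=> dR dB w S N wW NS.
have [w0 [w0W w0m vS]] := minrep_ex hgen S wW.
move: vS; rewrite /WS /= => /gen_prodgP [n [c cS ev]].
have [e [N' N'S h]] := reduce (sW_of hgen) cS w0W NS.
rewrite -ev mulKVg in h.
have hd := dR _ h; have hb := bd_resp h.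
rewrite DmapB DmapMz !Dmap_basis in hd.
rewrite DmapB DmapMz !Dmap_basis /bd /= in hb.
rewrite (zlem _ _ (d (w0, S, N') *~ e) (bdry w0 S N' *~ e)) -mulrzBl.
apply: inRD; first exact: inRB.
by apply: inRMz; apply: dB.
Qed.

Lemma dx_close (hgen : W :=: <<[set s i | i : 'I_l]>>%g) (d : gen l gT -> fm) :
  respectsR C W s d -> basis_formula C W s d ->
  forall x, valid W x -> R (Dm d x - Dm bd x).
Proof.
move=> dR dB x vx.
rewrite /Dmap -sumrB; apply: inR_sum => g _.
rewrite -mulrzBl.
case: (eqVneq (x g) 0) => [->|xg]; first by rewrite mulr0z; apply: inR0.
apply: inRMz; have /andP [gW gS] := vx g xg.
by case: g gW gS {xg} => [[w S] N] /= wW NS; apply: d_close.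
Qed.

End Work2.


Section Work3.
Variables (l : nat) (gT : finGroupType).

Local Notation fm := (fmod l gT).
Local Notation Dm := (@Dmap l gT).
Local Notation bd := (@bd l gT).

Lemma pos_add (S : {set 'I_l}) (j k : 'I_l) : j \notin S ->
  pos S k = ((j < k)%N + pos (j |: S) k)%N.
Proof.
move=> jS; rewrite /pos (cardsD1 j) !inE jS /= addnS.
have -> : [set i' in ~: S | (i' < k)%N] :\ j = [set i' in ~: (j |: S) | (i' < k)%N].
  by apply/setP => x; rewrite !inE; case: (x == j).
by [].
Qed.

Definition sig (S : {set 'I_l}) (j : 'I_l) (c : nat) : int := (-1) ^+ (pos S j + c + 1).

Lemma sig_anti (S : {set 'I_l}) (j k : 'I_l) (a b : nat) :
  j \notin S -> k \notin S -> j != k ->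
  sig (j |: S) k b * sig S j a = - (sig (k |: S) j a * sig S k b).
Proof.
move=> jS kS jk; rewrite /sig (pos_add k jS) (pos_add j kS).
set A := pos (j |: S) k; set B := pos (k |: S) j.
rewrite -!addnA !(exprD _ (_ < _)%N) !addnA.
set X := (-1) ^+ (A + b + 1); set Y := (-1) ^+ (B + a + 1).
case: ltngtP => h.
- by rewrite expr0 expr1 mul1r mulN1r mulrN mulrC.
- by rewrite (_ : (-1) ^+ false = 1) // (_ : (-1) ^+ true = -1) // mul1r mulN1r mulrN opprK mulrC.
- by move: jk; rewrite (val_inj h) eqxx.
Qed.


Lemma int_self_opp (x : int) : x = - x -> x = 0.
Proof. by move=> h; apply/eqP; rewrite -[x == 0]/((2 == 0)%N || (x == 0)) -mulrn_eq0 mulr2n {1}h addNr. Qed.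

Lemma swap_sum (M : zmodType) (F G : nat -> nat -> M) :
  (forall a b, G a b = - F b a) ->
  \sum_(c <- [:: 1%N; 2%N]) \sum_(c' <- [:: 1%N; 2%N]) G c c' =
  - \sum_(c <- [:: 1%N; 2%N]) \sum_(c' <- [:: 1%N; 2%N]) F c c'.
Proof.
move=> h; rewrite exchange_big -sumrN; apply: eq_bigr => a _; rewrite -sumrN.
by apply: eq_bigr => b _; apply: h.
Qed.

Lemma anti_sum (I : finType) (M : zmodType) (K : I -> I -> M) :
  (forall j k, K k j = - K j k) ->
  \sum_j \sum_k K j k = - \sum_j \sum_k K j k.
Proof.
move=> A; rewrite [LHS]exchange_big -sumrN; apply: eq_bigr => x _; rewrite -sumrN.
by apply: eq_bigr => y _; exact: A.
Qed.

Lemma dd0 (w : gT) (S N : {set 'I_l}) : Dm bd (bdry w S N) = 0.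
Proof.
pose Nc (j : 'I_l) (c : nat) (M : {set 'I_l}) := if c == 1%N then j |: M else M.
pose K j k := if (j \notin S) && (k \notin j |: S) then
   \sum_(c <- [:: 1%N; 2%N]) \sum_(c' <- [:: 1%N; 2%N])
      basis_el w (k |: (j |: S)) (Nc k c' (Nc j c N)) *~ sig (j |: S) k c' *~ sig S j c
   else 0.
have E : Dm bd (bdry w S N) = \sum_j \sum_k K j k.
  rewrite /bdry Dmap_sum big_mkcond; apply: eq_bigr => j _.
  rewrite /K; case: (j \notin S); last by rewrite big1.
  rewrite Dmap_sum.
  have -> : \sum_(c <- [:: 1%N; 2%N]) Dm bd (basis_el w (j |: S) (if c == 1%N then j |: N else N)
        *~ (-1) ^+ (pos S j + c + 1)) =
     \sum_(c <- [:: 1%N; 2%N]) \sum_(k | k \notin j |: S) \sum_(c' <- [:: 1%N; 2%N])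
      basis_el w (k |: (j |: S)) (Nc k c' (Nc j c N)) *~ sig (j |: S) k c' *~ sig S j c.
    apply: eq_bigr => c _; rewrite DmapMz Dmap_basis /bd /bdry /= mulrz_suml.
    apply: eq_bigr => k _; rewrite mulrz_suml; apply: eq_bigr => c' _.
    by [].
  rewrite exchange_big big_mkcond; apply: eq_bigr => k _.
  by case: (k \notin j |: S).
have A : forall j k, K k j = - K j k.
  move=> j k; rewrite /K.
  have -> : (k \notin S) && (j \notin k |: S) = (j \notin S) && (k \notin j |: S).
    rewrite !inE; case: (j \in S); case: (k \in S); by rewrite /= ?orbT // ?orbF eq_sym.
  case h: ((j \notin S) && (k \notin j |: S)); last by rewrite oppr0.
  move/andP: h => [jS]; rewrite !inE negb_or => /andP [kj kS].
  have NcC : forall a b, Nc j a (Nc k b N) = Nc k b (Nc j a N).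
    by move=> a b; rewrite /Nc; case: (a == 1%N); case: (b == 1%N); rewrite // setUCA.
  apply: swap_sum => a b.
  rewrite (setUCA [set j] [set k] S) (NcC b a) -!mulrzA (sig_anti b a jS kS) ?mulrNz ?opprK //.
  by rewrite eq_sym.
have T0 := anti_sum A.
rewrite E; apply/ffunP => g; rewrite ffunE; apply: int_self_opp.
by have := congr1 (fun f : fm => f g) T0; rewrite /= ffunE.
Qed.

End Work3.


Section Work4.
Variables (l : nat) (C : 'M[int]_l) (gT : finGroupType) (W : {group gT})
          (s : 'I_l -> gT).

Local Notation fm := (fmod l gT).
Local Notation R := (inR C W s).
Local Notation Dm := (@Dmap l gT).
Local Notation bd := (@bd l gT).
Local Notation wa := (@wact l gT).

Lemma wactD u x y : wa u (x + y) = wa u x + wa u y.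
Proof. by apply/ffunP => g; rewrite !ffunE. Qed.

Lemma wact0 u : wa u 0 = 0.
Proof. by apply/ffunP => g; rewrite !ffunE. Qed.

Lemma wactMz u x z : wa u (x *~ z) = wa u x *~ z.
Proof. by apply/ffunP => g; rewrite !ffunMzE !ffunE ffunMzE. Qed.

Lemma wactN u x : wa u (- x) = - wa u x.
Proof. by rewrite -mulrN1z wactMz mulrN1z. Qed.

Lemma wactB u x y : wa u (x - y) = wa u x - wa u y.
Proof. by rewrite wactD wactN. Qed.

Lemma wact_sum u (I : Type) (r : seq I) (P : pred I) (F : I -> fm) :
  wa u (\sum_(i <- r | P i) F i) = \sum_(i <- r | P i) wa u (F i).
Proof. exact: (big_morph _ (wactD u) (wact0 u)). Qed.

Lemma wact_basis u (w : gT) (S N : {set 'I_l}) :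
  wa u (basis_el w S N) = basis_el (u * w)%g S N.
Proof.
apply/ffunP => [[[a S'] N']]; rewrite !ffunE /= !xpair_eqE.
by rewrite -(inj_eq (mulgI u)) mulKVg.
Qed.

Lemma wact_rel u (w : gT) (S N : {set 'I_l}) i :
  wa u (Defs.rel C s w S N i) = Defs.rel C s (u * w)%g S N i.
Proof. by rewrite /Defs.rel wactB wactMz !wact_basis mulgA. Qed.

Lemma wact_R u x : u \in W -> R x -> R (wa u x).
Proof.
move=> uW [c ->].
rewrite wact_sum; apply: inR_sum => w wW.
rewrite wact_sum; apply: inR_sum => S _.
rewrite wact_sum; apply: inR_sum => N NS.
rewrite wact_sum; apply: inR_sum => i iS.
rewrite wactMz wact_rel; apply: inRMz; apply: inR_rel => //.
by rewrite groupM.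
Qed.

Lemma wact_bdry u (w : gT) (S N : {set 'I_l}) :
  wa u (bdry w S N) = bdry (u * w)%g S N.
Proof.
rewrite /bdry wact_sum; apply: eq_bigr => j _.
rewrite wact_sum; apply: eq_bigr => c _.
by rewrite wactMz wact_basis.
Qed.

Lemma wact_Dm u x : wa u (Dm bd x) = Dm bd (wa u x).
Proof.
rewrite /Dmap wact_sum.
pose h (g : gen l gT) : gen l gT := ((u * g.1.1)%g, g.1.2, g.2).
have hinj : injective h.
  move=> [[a1 b1] c1] [[a2 b2] c2] [e1 e2 e3].
  by rewrite (mulgI _ _ _ e1) e2 e3.
rewrite [RHS](reindex_inj hinj); apply: eq_bigr => [[[a S] N]] _.
by rewrite wactMz /bd /= wact_bdry ffunE /= mulKg.
Qed.

Lemma valid_wact u (x : fm) : u \in W -> valid W x -> valid W (wa u x).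
Proof.
move=> uW vx [[a S] N]; rewrite ffunE /= => /vx /andP [/= aW NS].
apply/andP; split => //=.
by rewrite -(mulKVg u a) groupM.
Qed.

Lemma valid0 : valid W (0 : fm).
Proof. by move=> g; rewrite ffunE eqxx. Qed.

Lemma validD (x y : fm) : valid W x -> valid W y -> valid W (x + y).
Proof.
move=> vx vy g; rewrite ffunE => h.
case: (eqVneq (x g) 0) => [hx|]; last exact: vx.
by apply: vy; move: h; rewrite hx add0r.
Qed.

Lemma validMz (x : fm) z : valid W x -> valid W (x *~ z).
Proof.
move=> vx g; rewrite ffunMzE => h; apply: vx; apply: contraNneq h => ->.
by rewrite mul0rz.
Qed.

Lemma valid_bdry (w : gT) (S N : {set 'I_l}) : w \in W -> N \subset S -> valid W (bdry w S N).
Proof.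
move=> wW NS.
rewrite /bdry; elim/big_rec: _ => [|j x _ vx]; first exact: valid0.
apply: validD => //.
elim/big_rec: _ => [|c y _ vy]; first exact: valid0.
apply: validD => //; apply: validMz.
move=> g; rewrite ffunE; case: (eqVneq g (w, j |: S, if c == 1%N then j |: N else N)) => [-> _|]; last by rewrite eqxx.
by rewrite /valid_gen /= wW; apply: Nc_sub.
Qed.

End Work4.

Unset Implicit Arguments.
Set Strict Implicit.

Theorem proposition3p3p2 (l : nat) (C : 'M[int]_l) (hC : cartan_finite C)
  (gT : finGroupType) (W : {group gT}) (s : 'I_l -> gT) (rho : gT -> 'M[int]_l)
  (hgen : W :=: <<[set s i | i : 'I_l]>>%g)
  (hrho_mul : {in W &, forall x y, rho (x * y)%g = rho x *m rho y})
  (hrho_inj : {in W &, injective rho})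
  (hrho_s : forall i, rho (s i) = simple_refl C i) :
  (exists d : gen l gT -> fmod l gT,
      respectsR C W s d /\ basis_formula C W s d) /\
  (forall d : gen l gT -> fmod l gT,
      respectsR C W s d -> basis_formula C W s d ->
      (forall u x, u \in W -> valid W x ->
          inR C W s (Dmap d (wact u x) - wact u (Dmap d x))) /\
      (forall x, valid W x -> inR C W s (Dmap d (Dmap d x)))).
Proof.
split.
  exists (@bd l gT); split; first exact: bd_resp.
  by move=> w S N _ _ _; rewrite /bd /= subrr; apply: inR0.
move=> d dR dB; split.
  move=> u x uW vx.
  have h1 := dx_close hgen dR dB (valid_wact uW vx).
  have h2 := wact_R uW (dx_close hgen dR dB vx).
  apply: inR_eq (inRB h1 h2).
  by rewrite wactB -wact_Dm opprB addrA subrK.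
move=> x vx.
rewrite {2}/Dmap Dmap_sum; apply: inR_sum => [[[w S] N]] _.
rewrite DmapMz.
case: (eqVneq (x (w, S, N)) 0) => [->|xg]; first by rewrite mulr0z; apply: inR0.
apply: inRMz; have /andP [/= wW NS] := vx _ xg.
have hv : valid W (bd (w, S, N)) by rewrite /bd /=; apply: valid_bdry.
have ha : inR C W s (Dmap d (d (w, S, N) - bd (w, S, N))) :=
  dR _ (d_close hgen dR dB wW NS).
have hb := dx_close hgen dR dB hv.
apply: inR_eq (inRD ha hb).
have -> : Dmap (@bd l gT) (bd (w, S, N)) = 0 by exact: dd0.
by rewrite subr0 DmapB subrK.
Qed.
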